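(* If the indefinite binary quadratic form $(A,B,C)$ over $\mathbb{Q}((1/T))$ is reduced, then the form $(C,B,A)$ is reduced.
   Context: $\mathbb{Q}((1/T))$ is the field of formal Laurent series in $1/T$ over $\mathbb{Q}$; $\deg$ of a nonzero series is the exponent of its leading term, $\deg0=-\infty$. A binary quadratic form $(A,B,C)$ is $AX^2+BXY+CY^2$ with $A,B,C\in\mathbb{Q}((1/T))$ not all in $\mathbb{Q}(T)$, discriminant $D=B^2-4AC$; indefinite means $D\ne0$ is a square in $\mathbb{Q}((1/T))$; a square root $\sqrt D$ is fixed (the same for both forms, which have the same discriminant). If $A\neq0$, the first and second roots are $f=\frac{\sqrt D-B}{2A}$ and $s=\frac{-\sqrt D-B}{2A}$. The form is reduced if $A\ne0$, $f\ne0$ and $\deg f<0<\deg s$. *)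

(* Defs.v *)
From Stdlib Require Import ClassicalEpsilon.
From mathcomp Require Import all_boot all_order all_algebra.
From mathcomp Require Import zify.

Set Implicit Arguments.
Unset Strict Implicit.
Unset Printing Implicit Defensive.
Import Order.TTheory GRing.Theory Num.Theory.
Local Open Scope ring_scope.

(* An element of Q((1/T)): coefficient family (coef x i = coefficient of T^i)
   with support bounded above. *)
Record laurent := Laurent {
  coef : int -> rat ;
  coef_bnd : exists N : int, forall i : int, N < i -> coef i = 0 }.

Definition bnd_of (f : int -> rat) : int :=
  epsilon (inhabits 0) (fun N : int => forall i : int, N < i -> f i = 0).

Lemma bnd_ofP (x : laurent) i : bnd_of (coef x) < i -> coef x i = 0.
Proof. exact: (epsilon_spec (inhabits 0) _ (coef_bnd x)). Qed.

Definition Lzero : laurent := @Laurent (fun _ => 0) (ex_intro _ 0 (fun _ _ => erefl)).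

Lemma Lone_bnd : exists N : int, forall i : int, N < i ->
  (if i == 0 then 1 else 0 : rat) = 0.
Proof. by exists 0 => i Hi; rewrite gt_eqF. Qed.
Definition Lone : laurent := Laurent Lone_bnd.

Lemma Ladd_bnd (x y : laurent) : exists N : int, forall i : int, N < i ->
  coef x i + coef y i = 0.
Proof.
exists (Num.max (bnd_of (coef x)) (bnd_of (coef y))) => i; rewrite gt_max => /andP[h1 h2].
by rewrite !bnd_ofP ?addr0.
Qed.
Definition Ladd (x y : laurent) : laurent := Laurent (Ladd_bnd x y).

Lemma Lopp_bnd (x : laurent) : exists N : int, forall i : int, N < i -> - coef x i = 0.
Proof. by exists (bnd_of (coef x)) => i h; rewrite bnd_ofP ?oppr0. Qed.
Definition Lopp (x : laurent) : laurent := Laurent (Lopp_bnd x).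

(* Cauchy product: coefficient of T^n is the (finite) sum of
   coef x i * coef y (n - i) over n - bnd y <= i <= bnd x. *)
Definition mul_coef (x y : laurent) (n : int) : rat :=
  let lo := n - bnd_of (coef y) in
  \sum_(k < absz (Num.max 0 (bnd_of (coef x) - lo + 1)))
     coef x (lo + k%:Z) * coef y (n - (lo + k%:Z)).

Lemma Lmul_bnd (x y : laurent) : exists N : int, forall i : int, N < i ->
  mul_coef x y i = 0.
Proof.
exists (bnd_of (coef x) + bnd_of (coef y)) => i hi.
rewrite /mul_coef.
have -> : Num.max 0 (bnd_of (coef x) - (i - bnd_of (coef y)) + 1) = 0.
  by apply/max_idPl; lia.
by rewrite big_ord0.
Qed.
Definition Lmul (x y : laurent) : laurent := Laurent (Lmul_bnd x y).

Definition Linv (x : laurent) : laurent :=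
  epsilon (inhabits Lzero) (fun y => Lmul x y = Lone).
Definition Ldiv (x y : laurent) : laurent := Lmul x (Linv y).

Definition Ltwo : laurent := Ladd Lone Lone.
Definition Lfour : laurent := Ladd Ltwo Ltwo.

(* deg: None stands for -oo (deg 0), Some d for the exponent of the leading term *)
Definition deg (x : laurent) : option int :=
  epsilon (inhabits None) (fun o => match o with
    | None => x = Lzero
    | Some d => coef x d != 0 /\ forall i : int, d < i -> coef x i = 0 end).

Definition deg_lt (a b : option int) : Prop :=
  match a, b with
  | None, None => False
  | None, Some _ => True
  | Some _, None => False
  | Some m, Some n => m < n
  end.

Lemma Lpoly_bnd (p : {poly rat}) : exists N : int, forall i : int, N < i ->
  (match i with Posz n => p`_n | Negz _ => 0 end) = 0.
Proof.
exists (size p)%:Z => -[n|n] //= h; apply: nth_default; lia.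
Qed.
Definition Lpoly (p : {poly rat}) : laurent := Laurent (Lpoly_bnd p).

Definition in_QT (x : laurent) : Prop :=
  exists p q : {poly rat}, q != 0 /\ Lmul x (Lpoly q) = Lpoly p.

Definition disc (A B C : laurent) : laurent :=
  Ladd (Lmul B B) (Lopp (Lmul Lfour (Lmul A C))).

Definition first_root (sD A B : laurent) : laurent :=
  Ldiv (Ladd sD (Lopp B)) (Lmul Ltwo A).
Definition second_root (sD A B : laurent) : laurent :=
  Ldiv (Ladd (Lopp sD) (Lopp B)) (Lmul Ltwo A).

Definition reduced (sD A B C : laurent) : Prop :=
  A <> Lzero /\ first_root sD A B <> Lzero /\
  deg_lt (deg (first_root sD A B)) (Some 0) /\
  deg_lt (Some 0) (deg (second_root sD A B)).

(* Main.v *)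
Require Import Defs.
From mathcomp Require Import all_boot all_order all_algebra.
From mathcomp Require Import zify ring.
From Stdlib Require Import ClassicalEpsilon FunctionalExtensionality ProofIrrelevance.
Set Implicit Arguments.
Unset Strict Implicit.
Unset Printing Implicit Defensive.
Import Order.TTheory GRing.Theory Num.Theory.
Local Open Scope ring_scope.

Lemma Lext (x y : laurent) : (forall i : int, coef x i = coef y i) -> x = y.
Proof.
case: x => fx hx; case: y => fy hy /= h.
have e : fx = fy by apply: functional_extensionality.
subst fy; congr Laurent; apply: proof_irrelevance.
Qed.

Definition W (F : int -> rat) (lo : int) (len : nat) : rat :=
  \sum_(k < len) F (lo + k%:Z).

Lemma W_split (F : int -> rat) (lo : int) (m n : nat) : W F lo (m + n) = W F lo m + W F (lo + m%:Z) n.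
Proof.
rewrite /W big_split_ord /=; congr (_ + _); apply: eq_bigr => k _ /=.
by rewrite PoszD addrA.
Qed.

Lemma W0 (F : int -> rat) (lo : int) (len : nat) : (forall k : nat, (k < len)%N -> F (lo + k%:Z) = 0) -> W F lo len = 0.
Proof. by move=> h; rewrite /W big1 // => k _; apply: h. Qed.

Lemma W_widen (F : int -> rat) (lo : int) (len : nat) (lo' : int) (len' : nat) :
  (forall i : int, i < lo -> F i = 0) -> (forall i : int, lo + len%:Z <= i -> F i = 0) ->
  lo' <= lo -> lo + len%:Z <= lo' + len'%:Z -> W F lo' len' = W F lo len.
Proof.
move=> h1 h2 hl hr.
have -> : len' = (absz (lo - lo')%R + (len + absz (lo' + len'%:Z - lo - len%:Z)%R))%N by lia.
rewrite W_split W_split W0 ?add0r; last by move=> k hk; apply: h1; lia.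
rewrite [W F (_ + _ + _) _]W0 ?addr0; last by move=> k hk; apply: h2; lia.
by congr W; lia.
Qed.


Definition Fm (x y : laurent) n := fun i => coef x i * coef y (n - i).

Lemma Wm_mono (x y : laurent) (n M1 M2 N1 N2 : int) :
  (forall i : int, M1 < i -> coef x i = 0) -> (forall i : int, M2 < i -> coef y i = 0) ->
  M1 <= N1 -> M2 <= N2 ->
  W (Fm x y n) (n - N2) (absz (Num.max (0:int) (N1 - (n - N2) + 1))) =
  W (Fm x y n) (n - M2) (absz (Num.max (0:int) (M1 - (n - M2) + 1))).
Proof.
move=> h1 h2 l1 l2.
have [le|lt] := lerP (M1 - (n - M2) + 1) 0.
  rewrite [RHS]W0; last by move=> k hk; lia.
  apply: W0 => k _.
  have [hi|hi] := lerP (n - N2 + k%:Z) M1.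
    by rewrite /Fm h2 ?mulr0 //; lia.
  by rewrite /Fm h1 ?mul0r.
apply: W_widen.
- by move=> i hi; rewrite /Fm h2 ?mulr0 //; lia.
- by move=> i hi; rewrite /Fm h1 ?mul0r //; lia.
- lia.
- lia.
Qed.

Lemma mulcoef_win x y n Mx My :
  (forall i : int, Mx < i -> coef x i = 0) -> (forall i : int, My < i -> coef y i = 0) ->
  mul_coef x y n = W (Fm x y n) (n - My) (absz (Num.max (0:int) (Mx - (n - My) + 1))).
Proof.
move=> hx hy.
have -> : mul_coef x y n = W (Fm x y n) (n - bnd_of (coef y))
      (absz (Num.max (0:int) (bnd_of (coef x) - (n - bnd_of (coef y)) + 1))) by [].
rewrite -(@Wm_mono x y n _ _ (Num.max Mx (bnd_of (coef x))) (Num.max My (bnd_of (coef y))));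
  [|exact: bnd_ofP|exact: bnd_ofP|lia|lia].
by rewrite -(@Wm_mono x y n Mx My (Num.max Mx (bnd_of (coef x))) (Num.max My (bnd_of (coef y)))) //; lia.
Qed.

Lemma mul_coef_gt x y (d e n : int) :
  (forall i : int, d < i -> coef x i = 0) -> (forall i : int, e < i -> coef y i = 0) ->
  d + e < n -> mul_coef x y n = 0.
Proof. move=> hx hy hn; rewrite (mulcoef_win n hx hy); apply: W0 => k hk; exfalso; clear -hn hk; lia. Qed.

Lemma mul_coef_top x y (d e : int) :
  (forall i : int, d < i -> coef x i = 0) -> (forall i : int, e < i -> coef y i = 0) ->
  mul_coef x y (d + e) = coef x d * coef y e.
Proof.
move=> hx hy; rewrite (mulcoef_win _ hx hy) /W.
rewrite (_ : absz _ = 1%N); last by lia.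
rewrite big_ord1 /Fm; congr (coef _ _ * coef _ _) => /=; lia.
Qed.

Lemma mul0L y : Lmul Lzero y = Lzero.
Proof.
apply: Lext => n /=; rewrite (mulcoef_win n (@bnd_ofP Lzero) (@bnd_ofP y)).
by apply: W0 => k _; rewrite /Fm /= mul0r.
Qed.

Lemma mul0R y : Lmul y Lzero = Lzero.
Proof.
apply: Lext => n /=; rewrite (mulcoef_win n (@bnd_ofP y) (@bnd_ofP Lzero)).
by apply: W0 => k _; rewrite /Fm /= mulr0.
Qed.

Lemma cDl x y z n : mul_coef (Ladd x y) z n = mul_coef x z n + mul_coef y z n.
Proof.
pose M := Num.max (bnd_of (coef x)) (bnd_of (coef y)).
have hx : forall i : int, M < i -> coef x i = 0.
  by move=> i; rewrite gt_max => /andP[h _]; exact: bnd_ofP.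
have hy : forall i : int, M < i -> coef y i = 0.
  by move=> i; rewrite gt_max => /andP[_ h]; exact: bnd_ofP.
have hxy : forall i : int, M < i -> coef (Ladd x y) i = 0.
  by move=> i hi /=; rewrite hx ?hy ?addr0.
rewrite (mulcoef_win n hxy (@bnd_ofP z)) (mulcoef_win n hx (@bnd_ofP z)).
rewrite (mulcoef_win n hy (@bnd_ofP z)) /W -big_split; apply: eq_bigr => k _.
by rewrite /Fm /= mulrDl.
Qed.

Lemma cNl x y n : mul_coef (Lopp x) y n = - mul_coef x y n.
Proof.
have hx : forall i : int, bnd_of (coef x) < i -> coef (Lopp x) i = 0.
  by move=> i hi /=; rewrite bnd_ofP ?oppr0.
rewrite (mulcoef_win n hx (@bnd_ofP y)) (mulcoef_win n (@bnd_ofP x) (@bnd_ofP y)).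
rewrite /W -sumrN; apply: eq_bigr => k _.
by rewrite /Fm /= mulNr.
Qed.

Lemma cC x y n : mul_coef x y n = mul_coef y x n.
Proof.
rewrite (mulcoef_win n (@bnd_ofP x) (@bnd_ofP y)) (mulcoef_win n (@bnd_ofP y) (@bnd_ofP x)).
rewrite /W.
set L1 := absz _. set L2 := absz _.
have eL : L2 = L1 by rewrite /L1 /L2; lia.
rewrite eL (reindex_inj rev_ord_inj) /=; apply: eq_bigr => -[k hk] _ /=.
rewrite /Fm mulrC; congr (coef _ _ * coef _ _); rewrite /L1 in hk *; lia.
Qed.

Lemma cDr x y z n : mul_coef z (Ladd x y) n = mul_coef z x n + mul_coef z y n.
Proof. by rewrite cC cDl !(cC z). Qed.

Lemma cNr x y n : mul_coef y (Lopp x) n = - mul_coef y x n.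
Proof. by rewrite cC cNl cC. Qed.

Definition degP (x : laurent) (o : option int) : Prop := match o with
    | None => x = Lzero
    | Some d => coef x d != 0 /\ forall i : int, d < i -> coef x i = 0 end.

Lemma deg_specP x : degP x (deg x).
Proof.
have ex : exists o, degP x o.
  case: (classic (x = Lzero)) => [->|nz]; first by exists None.
  have [i0 hi0] : exists i0, coef x i0 <> 0.
    apply: not_all_ex_not => h; apply: nz; apply: Lext => i; exact: h.
  set B := bnd_of (coef x).
  have iB : i0 <= B.
    by rewrite leNgt; apply/negP => h; apply: hi0; apply: bnd_ofP.
  pose P := fun k : nat => coef x (B - k%:Z) != 0.
  have exP : exists k, P k.
    exists (absz (B - i0)); rewrite /P.
    rewrite (_ : B - (absz (B - i0))%:Z = i0); last by lia.
    by apply/eqP.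
  case: (ex_minnP exP) => k hk hmin.
  exists (Some (B - k%:Z)); split => // i hi.
  have [iB'|iB'] := ltrP B i; first exact: bnd_ofP.
  apply/eqP; apply: contraT => hnz.
  have : P (absz (B - i)) by rewrite /P (_ : B - (absz (B - i))%:Z = i) //; lia.
  move/hmin; lia.
exact: (epsilon_spec (inhabits None) (degP x) ex).
Qed.

Lemma deg_some x (d : int) : coef x d != 0 -> (forall i : int, d < i -> coef x i = 0) ->
  deg x = Some d.
Proof.
move=> h1 h2; have := deg_specP x; case: (deg x) => [d'|] /=.
  move=> [h1' h2']; congr Some.
  have [lt|lt|->] := ltgtP d d' => //.
    by move: h1'; rewrite h2.
  by move: h1; rewrite h2'.
by move=> e; move: h1; rewrite e.
Qed.

Lemma deg_SomeP x d : deg x = Some d -> coef x d != 0 /\ forall i : int, d < i -> coef x i = 0.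
Proof. by move=> e; have := deg_specP x; rewrite e. Qed.

Lemma deg_NoneP x : deg x = None -> x = Lzero.
Proof. by move=> e; have := deg_specP x; rewrite e. Qed.

Lemma deg_zero : deg Lzero = None.
Proof.
by have := deg_specP Lzero; case: (deg Lzero) => [d [h _]|] //; move: h; rewrite eqxx.
Qed.

Lemma deg_nz x : x <> Lzero -> exists d, deg x = Some d.
Proof.
move=> nz; case e: (deg x) => [d|]; first by exists d.
by case: nz; apply: deg_NoneP.
Qed.

Lemma deg_mul x y d e : deg x = Some d -> deg y = Some e -> deg (Lmul x y) = Some (d + e).
Proof.
move=> /deg_SomeP [h1 h2] /deg_SomeP [h3 h4].
apply: deg_some => /=.
  by rewrite (mul_coef_top h2 h4) mulf_neq0.
by move=> i hi; apply: (mul_coef_gt h2 h4).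
Qed.

Section Inverse.
Variables (x : laurent) (d : int).
Hypothesis (hd : coef x d != 0) (hz : forall i : int, d < i -> coef x i = 0).

Definition step (s : seq rat) : rat :=
  (coef x d)^-1 * ((size s == 0%N)%:R -
     \sum_(j < size s) coef x (d - (j.+1)%:Z) * s`_(size s - j.+1)).

Fixpoint hs (k : nat) : seq rat :=
  if k is k'.+1 then rcons (hs k') (step (hs k')) else [::].

Lemma size_hs k : size (hs k) = k.
Proof. by elim: k => //= k ih; rewrite size_rcons ih. Qed.

Definition g (k : nat) : rat := (hs k.+1)`_k.

Lemma nth_hs k i : (i < k)%N -> (hs k)`_i = g i.
Proof.
elim: k => // k ih hi /=; rewrite nth_rcons size_hs.
case: ltnP => hik; first exact: ih.
have -> : i = k by lia.
by rewrite eqxx /g /= nth_rcons size_hs ltnn eqxx.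
Qed.

Lemma gE k : g k = (coef x d)^-1 * ((k == 0%N)%:R -
     \sum_(j < k) coef x (d - (j.+1)%:Z) * g (k - j.+1)).
Proof.
rewrite {1}/g /= nth_rcons size_hs ltnn eqxx /step size_hs; congr (_ * (_ - _)).
by apply: eq_bigr => -[j hj] _ /=; rewrite nth_hs //; lia.
Qed.

Definition ycoef (j : int) : rat := if j <= - d then g (absz (- d - j)) else 0.

Lemma ybnd : exists N : int, forall i : int, N < i -> ycoef i = 0.
Proof. by exists (- d) => i hi; rewrite /ycoef leNgt hi. Qed.

Definition yinv : laurent := Laurent ybnd.

Lemma ycoefE (k : nat) : ycoef (- d - k%:Z) = g k.
Proof.
rewrite /ycoef ifT; last by lia.
by rewrite (_ : - d - (- d - k%:Z) = k%:Z) //; lia.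
Qed.

Lemma yinvP : Lmul x yinv = Lone.
Proof.
have hy : forall i : int, - d < i -> coef yinv i = 0.
  by move=> i hi /=; rewrite /ycoef leNgt hi.
apply: Lext => n /=; rewrite (mulcoef_win n hz hy).
have [npos|nneg] := ltrP 0 n.
  rewrite gt_eqF //; apply: W0 => k hk; exfalso; lia.
have [m ->] : exists m : nat, n = - m%:Z by exists (absz n); lia.
rewrite /W (_ : absz _ = m.+1); last by lia.
rewrite big_ord_recr /=.
rewrite (reindex_inj rev_ord_inj) /=.
rewrite [X in _ + X]/Fm /=.
rewrite (_ : - m%:Z - - d + m%:Z = d); last by lia.
rewrite (_ : - m%:Z - d = - d - m%:Z); last by lia.
rewrite ycoefE.
rewrite (eq_bigr (fun j : 'I_m => coef x (d - (j.+1)%:Z) * g (m - j.+1))); last first.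
  move=> [j hj] _; rewrite /Fm /= -ycoefE; congr (coef _ _ * ycoef _); lia.
rewrite [g m]gE mulrA mulfV // mul1r addrC subrK.
by case: m.
Qed.

End Inverse.

Lemma Linv_spec x : x <> Lzero -> Lmul x (Linv x) = Lone.
Proof.
move=> nz; have [d hd] := deg_nz nz; have [h1 h2] := deg_SomeP hd.
exact: (epsilon_spec (inhabits Lzero) (fun y => Lmul x y = Lone)
          (ex_intro _ (yinv x d) (yinvP h1 h2))).
Qed.

Lemma deg_one : deg Lone = Some 0.
Proof. by apply: deg_some => [|i hi] /=; rewrite ?eqxx ?oner_neq0 // gt_eqF. Qed.

Lemma deg_Linv x d : deg x = Some d -> deg (Linv x) = Some (- d).
Proof.
move=> hd.
have nz : x <> Lzero by move=> e; move: hd; rewrite e deg_zero.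
have hi := Linv_spec nz.
case e: (deg (Linv x)) => [e'|]; last first.
  by move: hi; rewrite (deg_NoneP e) mul0R => h; move: deg_one; rewrite -h deg_zero.
move: (deg_mul hd e); rewrite hi deg_one => -[h]; congr Some; lia.
Qed.

Lemma deg_two : deg Ltwo = Some 0.
Proof. by apply: deg_some => [|i hi] /=; rewrite ?eqxx // gt_eqF // addr0. Qed.

Lemma deg_four : deg Lfour = Some 0.
Proof. by apply: deg_some => [|i hi] /=; rewrite ?eqxx // gt_eqF // !addr0. Qed.

Lemma key (A B C sD : laurent) : Lmul sD sD = disc A B C ->
  Lmul (Ladd sD (Lopp B)) (Ladd (Lopp sD) (Lopp B)) = Lmul Lfour (Lmul A C).
Proof.
move=> Hsq; apply: Lext => n /=.
have h := congr1 (fun z => coef z n) Hsq; rewrite /disc /= in h.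
rewrite cDl !cDr !cNl !cNr h (cC B sD); ring.
Qed.

Lemma nz_of_deg x d : deg x = Some d -> x <> Lzero.
Proof. by move=> e h; move: e; rewrite h deg_zero. Qed.

Theorem proposition10 (A B C sD : laurent) :
  ~ (in_QT A /\ in_QT B /\ in_QT C) ->
  disc A B C <> Lzero ->
  Lmul sD sD = disc A B C ->
  reduced sD A B C -> reduced sD C B A.
Proof.
move=> _ _ Hsq [hA [hf [hdf hds]]].
move: hf hdf hds; rewrite /first_root /second_root /Ldiv.
set a := Ladd sD (Lopp B); set b := Ladd (Lopp sD) (Lopp B).
move=> hf hdf hds.
have [dA eA] := deg_nz hA.
have e2A := deg_mul deg_two eA.
have eu := deg_Linv e2A.
have [da ea] : exists da, deg a = Some da.
  by apply: deg_nz => h; apply: hf; rewrite h mul0L.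
have [db eb] : exists db, deg b = Some db.
  apply: deg_nz => h; move: hds; rewrite h mul0L deg_zero //.
move: hdf hds; rewrite (deg_mul ea eu) (deg_mul eb eu) /= => hdf hds.
have hk := key Hsq; rewrite -/a -/b in hk.
have hC : C <> Lzero.
  move=> h; move: (deg_mul ea eb); rewrite hk h mul0R mul0R deg_zero //.
have [dC eC] := deg_nz hC.
have := deg_mul ea eb; rewrite hk (deg_mul deg_four (deg_mul eA eC)) => -[hdeg].
have ev := deg_Linv (deg_mul deg_two eC).
have efa := deg_mul ea ev; have esb := deg_mul eb ev.
split => //; split; first exact: nz_of_deg efa.
rewrite /first_root /second_root /Ldiv -/a -/b efa esb /=; split; lia.
Qed.
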